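(* Let $r$ denote either the max rank or the submax rank. If $\mathscr X\in\mathbb R^{I_1\times\cdots\times I_N}$ is a nonzero tensor, then there is a subtensor $\mathscr Y\in\mathbb R^{J_1\times\cdots\times J_N}$ of $\mathscr X$ such that $r(\mathscr X)=r(\mathscr Y)=J_n$ for some $n$ with $1\leq n\leq N$.
   Context: All tensors are real. For $\mathscr X\in\mathbb R^{I_1\times\cdots\times I_N}$, the mode-$n$ unfolding $\mathbf X_{(n)}$ is the $I_n\times\prod_{k\neq n}I_k$ matrix whose rows are indexed by $i_n$ and whose columns are exactly the vectors obtained from $\mathscr X$ by fixing all indices other than $i_n$; let $R_n=\operatorname{rank}(\mathbf X_{(n)})$. The max rank is $r(\mathscr X)=\max\{R_1,\dots,R_N\}$. The submax rank is $r(\mathscr X)=\operatorname{submax}\{R_1,\dots,R_N\}$, where for $N>1$ the submax of a multiset is its second largest value counted with multiplicity (e.g. $\operatorname{submax}\{1,2,3,3\}=3$), and $\operatorname{submax}\{R_1\}=R_1$ if $N=1$. A subtensor of $\mathscr X$ is a tensor $\mathscr Y\in\mathbb R^{J_1\times\cdots\times J_N}$ with $1\le J_n\le I_n$ of the form $y_{j_1\cdots j_N}=x_{i_{1j_1}\cdots i_{Nj_N}}$ for some indices $1\leq i_{n1}<\cdots<i_{nJ_n}\leq I_n$. *)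

(* Defs.v *)
From mathcomp Require Import all_boot all_order all_algebra.
From mathcomp Require Import reals.
Set Implicit Arguments. Unset Strict Implicit. Unset Printing Implicit Defensive.
Import Order.TTheory GRing.Theory Num.Theory.
Local Open Scope ring_scope.

Definition midx (N : nat) (I : 'I_N -> nat) := {dffun forall m : 'I_N, 'I_(I m)}.

Definition tensor (R : realType) (N : nat) (I : 'I_N -> nat) := midx I -> R.

(* Column indices of the mode-n unfolding: the indices of all modes other than n. *)
Definition cidx (N : nat) (I : 'I_N -> nat) (n : 'I_N) :=
  {dffun forall k : {k : 'I_N | k != n}, 'I_(I (val k))}.

Definition fullidx_fun (N : nat) (I : 'I_N -> nat) (n : 'I_N) (i : 'I_(I n))
    (j : cidx I n) : forall m : 'I_N, 'I_(I m) :=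
  fun m => match (m =P n) with
           | ReflectT e => eq_rect_r (fun k => 'I_(I k)) i e
           | ReflectF ne => j (exist _ m (introN eqP ne))
           end.

Definition fullidx (N : nat) (I : 'I_N -> nat) (n : 'I_N) (i : 'I_(I n))
    (j : cidx I n) : midx I := finfun (fullidx_fun i j).

(* Mode-n unfolding X_(n): rows indexed by i_n, one column per mode-n fiber
   (columns enumerated in the order of enum (cidx I n); the order is immaterial). *)
Definition unfolding (R : realType) (N : nat) (I : 'I_N -> nat) (X : tensor R I)
    (n : 'I_N) : 'M[R]_(I n, #|{: cidx I n}|) :=
  \matrix_(i < I n, c < #|{: cidx I n}|) X (fullidx i (enum_val c)).

Definition mode_rank (R : realType) (N : nat) (I : 'I_N -> nat) (X : tensor R I)
    (n : 'I_N) : nat := \rank (unfolding X n).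

Definition max_rank (R : realType) (N : nat) (I : 'I_N -> nat) (X : tensor R I) : nat :=
  \max_(n < N) mode_rank X n.

(* submax of a multiset (given as a sequence): second largest value counted with
   multiplicity; for a one-element multiset, its unique element. *)
Definition submax (s : seq nat) : nat :=
  if (size s <= 1)%N then head 0%N s else nth 0%N (sort geq s) 1.

Definition submax_rank (R : realType) (N : nat) (I : 'I_N -> nat) (X : tensor R I) : nat :=
  submax [seq mode_rank X n | n <- enum 'I_N].

Definition subtensor (R : realType) (N : nat) (I J : 'I_N -> nat) (X : tensor R I)
    (sigma : forall n : 'I_N, 'I_(J n) -> 'I_(I n)) : tensor R J :=
  fun j => X (finfun (fun m : 'I_N => sigma m (j m))).

Definition admissible (N : nat) (I J : 'I_N -> nat)
    (sigma : forall n : 'I_N, 'I_(J n) -> 'I_(I n)) : Prop :=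
  forall n : 'I_N, [/\ (0 < J n)%N, (J n <= I n)%N &
     forall a b : 'I_(J n), (a < b)%N -> (sigma n a < sigma n b)%N].

Definition has_rank_subtensor (R : realType) (N : nat) (I : 'I_N -> nat)
    (r : forall J : 'I_N -> nat, tensor R J -> nat) (X : tensor R I) : Prop :=
  exists (J : 'I_N -> nat) (sigma : forall n : 'I_N, 'I_(J n) -> 'I_(I n)),
    admissible sigma /\
    r I X = r J (subtensor X sigma) /\
    exists n : 'I_N, r J (subtensor X sigma) = J n.

(* Main.v *)
Require Import Defs.
From mathcomp Require Import all_boot all_order all_algebra.
From mathcomp Require Import reals.
Set Implicit Arguments. Unset Strict Implicit. Unset Printing Implicit Defensive.
Import Order.TTheory GRing.Theory Num.Theory.
Local Open Scope ring_scope.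


Lemma match_at (N : nat) (I : 'I_N -> nat) (n : 'I_N) (a : 'I_(I n)) (e : cidx I n)
  (b : bool) (r : reflect (n = n) b) :
  match r with
  | ReflectT p => eq_rect_r (fun k => 'I_(I k)) a p
  | ReflectF ne => e (exist _ n (introN eqP ne))
  end = a.
Proof. case: r => [p|ne]; last by case: ne. by rewrite (eq_irrelevance p erefl). Qed.

Lemma match_off (N : nat) (I : 'I_N -> nat) (n : 'I_N) (a : 'I_(I n)) (e : cidx I n)
  (k : {k : 'I_N | k != n}) (b : bool) (r : reflect (val k = n) b) :
  match r with
  | ReflectT p => eq_rect_r (fun k => 'I_(I k)) a p
  | ReflectF ne => e (exist _ (val k) (introN eqP ne))
  end = e k.
Proof.
case: r => [p|ne]; first by exfalso; move: (valP k); rewrite p eqxx.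
by case: k ne => k0 hk ne /=; rewrite (eq_irrelevance (introN eqP ne) hk).
Qed.

Lemma fullidx_at (N : nat) (I : 'I_N -> nat) (n : 'I_N) (a : 'I_(I n)) (e : cidx I n) :
  fullidx a e n = a.
Proof. rewrite /fullidx ffunE /fullidx_fun; exact: match_at. Qed.

Lemma fullidx_off (N : nat) (I : 'I_N -> nat) (n : 'I_N) (a : 'I_(I n)) (e : cidx I n)
  (k : {k : 'I_N | k != n}) : fullidx a e (val k) = e k.
Proof. rewrite /fullidx ffunE /fullidx_fun; exact: match_off. Qed.

Definition restr (N : nat) (I : 'I_N -> nat) (n : 'I_N) (j : midx I) : cidx I n :=
  @finfun _ (fun k : {k : 'I_N | k != n} => 'I_(I (val k))) (fun k => j (val k)).

Lemma fullidx_restr (N : nat) (I : 'I_N -> nat) (n : 'I_N) (j : midx I) :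
  fullidx (j n) (restr n j) = j.
Proof.
apply/ffunP => k; have [->|nk] := eqVneq k n; first by rewrite fullidx_at.
by rewrite (fullidx_off _ _ (exist _ k nk)) /restr ffunE.
Qed.

Lemma restr_fullidx (N : nat) (I : 'I_N -> nat) (n : 'I_N) (a : 'I_(I n)) (e : cidx I n) :
  restr n (fullidx a e) = e.
Proof. by apply/ffunP => k; rewrite /restr ffunE fullidx_off. Qed.

Lemma sum_midx (R : realType) (N : nat) (I : 'I_N -> nat) (n : 'I_N) (F : midx I -> R) :
  \sum_(j : midx I) F j = \sum_(a : 'I_(I n)) \sum_(e : cidx I n) F (fullidx a e).
Proof.
rewrite pair_big /=.
rewrite (reindex (fun p : 'I_(I n) * cidx I n => fullidx p.1 p.2)) //=.
exists (fun j : midx I => (j n, restr n j)) => [[a e] _|j _] /=.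
  by rewrite fullidx_at restr_fullidx.
by rewrite fullidx_restr.
Qed.

Lemma prod_sig (R : realType) (N : nat) (n : 'I_N) (F : 'I_N -> R) :
  \prod_(k | k != n) F k = \prod_(k : {k : 'I_N | k != n}) F (val k).
Proof.
rewrite (reindex_omap (val : {k : 'I_N | k != n} -> 'I_N) insub); last first.
  by move=> i Pi; rewrite insubT.
by apply: eq_bigl=> -[i iA]/=; rewrite insubT ?iA /= eqxx.
Qed.


Definition mlt (R : realType) (N : nat) (I J : 'I_N -> nat) (Y : tensor R J)
  (M : forall k : 'I_N, 'I_(I k) -> 'I_(J k) -> R) : tensor R I :=
  fun i => \sum_(j : midx J) (\prod_k M k (i k) (j k)) * Y j.

Lemma sum_enum (R : realType) (T : finType) (G : T -> R) :
  \sum_(c : 'I_#|{: T}|) G (enum_val c) = \sum_(e : T) G e.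
Proof.
rewrite (reindex (@enum_rank T)) /=; last by exists enum_val => x _; rewrite ?enum_rankK ?enum_valK.
by apply: eq_bigr => e _; rewrite enum_rankK.
Qed.

Lemma mlt_rank (R : realType) (N : nat) (I J : 'I_N -> nat) (Y : tensor R J)
  (M : forall k : 'I_N, 'I_(I k) -> 'I_(J k) -> R) (m : 'I_N) :
  (mode_rank (mlt Y M) m <= mode_rank Y m)%N.
Proof.
pose Mm : 'M[R]_(I m, J m) := \matrix_(a, b) M m a b.
pose Q : 'M[R]_(#|{: cidx J m}|, #|{: cidx I m}|) :=
  \matrix_(c, c') \prod_(k : {k : 'I_N | k != m}) M (val k) ((enum_val c' : cidx I m) k) ((enum_val c : cidx J m) k).
rewrite /mode_rank; have -> : unfolding (mlt Y M) m = Mm *m unfolding Y m *m Q.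
  apply/matrixP => a c'; rewrite !mxE /mlt (sum_midx m).
  under [RHS]eq_bigr do rewrite !mxE big_distrl /=.
  rewrite [RHS]exchange_big /=; apply: eq_bigr => b _.
  pose H := fun e : cidx J m => Mm a b * Y (fullidx b e) *
     \prod_(k : {k : 'I_N | k != m}) M (val k) ((enum_val c' : cidx I m) k) (e k).
  transitivity (\sum_e H e); last first.
    rewrite -(sum_enum H); apply: eq_bigr => c _; rewrite /H !mxE //.
  apply: eq_bigr => e _; rewrite /H !mxE.
  rewrite (bigD1 m) //= !fullidx_at prod_sig.
  rewrite [RHS]mulrAC; congr (_ * _ * _); apply: eq_bigr => k _.
  by rewrite !fullidx_off.
exact: leq_trans (mxrankM_maxl _ _) (mxrankM_maxr _ _).
Qed.


Lemma mode_rank_ext (R : realType) (N : nat) (I : 'I_N -> nat) (X X' : tensor R I) n :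
  (forall i, X i = X' i) -> mode_rank X n = mode_rank X' n.
Proof.
by move=> h; rewrite /mode_rank; congr (\rank _); apply/matrixP => a b; rewrite !mxE h.
Qed.

Lemma prod_zero (R : realType) (N : nat) (I : 'I_N -> nat) (i i' : midx I)
  (F : forall k, 'I_(I k) -> 'I_(I k) -> R) :
  i != i' -> (forall k a b, a != b -> F k a b = 0) -> \prod_k F k (i k) (i' k) = 0.
Proof.
move=> ne hF.
have : ~~ [forall k, i k == i' k].
  apply: contra ne => /forallP h; apply/eqP/ffunP => k; exact/eqP/h.
case/forallPn => k hk; rewrite (bigD1 k) //= hF ?mul0r //.
Qed.

Lemma subtensor_mlt (R : realType) (N : nat) (I J : 'I_N -> nat) (X : tensor R I)
    (sigma : forall n : 'I_N, 'I_(J n) -> 'I_(I n)) j :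
  subtensor X sigma j = mlt X (fun k (a : 'I_(J k)) (b : 'I_(I k)) => (sigma k a == b)%:R) j.
Proof.
rewrite /mlt /subtensor.
pose i0 : midx I := finfun (fun m : 'I_N => sigma m (j m)).
rewrite (bigD1 i0) //= [X in _ + X]big1 ?addr0.
  by rewrite big1 ?mul1r // => k _; rewrite /i0 ffunE eqxx.
move=> i ne.
rewrite (eq_bigr (fun k => ((i0 k == i k)%:R : R))); last by move=> k _; rewrite /i0 ffunE.
rewrite (@prod_zero R N I i0 i (fun k a b => ((a == b)%:R : R))) ?mul0r //.
- by rewrite eq_sym.
- by move=> k a b /negPf ->.
Qed.


Definition Sset (R : realType) (N : nat) (I : 'I_N -> nat) (X : tensor R I) (n : 'I_N)
  : {set 'I_(I n)} :=
  [set maxrankfun (unfolding X n) t | t : 'I_(\rank (unfolding X n))].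

Definition Jd (R : realType) (N : nat) (I : 'I_N -> nat) (X : tensor R I) (n : 'I_N)
  : 'I_N -> nat := fun k => if k == n then #|Sset X n| else I k.

Definition gn (R : realType) (N : nat) (I : 'I_N -> nat) (X : tensor R I) (n : 'I_N)
  (x : nat) : nat := nth 0%N (map val (enum (Sset X n))) x.

Definition gd (R : realType) (N : nat) (I : 'I_N -> nat) (X : tensor R I) (n : 'I_N)
  (k : 'I_N) (x : nat) : nat := if k == n then gn X n x else x.

Definition sigd (R : realType) (N : nat) (I : 'I_N -> nat) (X : tensor R I) (n : 'I_N)
  (i0 : midx I) : forall k : 'I_N, 'I_(Jd X n k) -> 'I_(I k) :=
  fun k j => insubd (i0 k) (gd X n k (val j)).

Lemma card_Sset (R : realType) (N : nat) (I : 'I_N -> nat) (X : tensor R I) (n : 'I_N) :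
  #|Sset X n| = \rank (unfolding X n).
Proof. by rewrite /Sset card_imset ?cardsT ?card_ord //; exact: maxrankfun_inj. Qed.

Lemma Jd_n (R : realType) (N : nat) (I : 'I_N -> nat) (X : tensor R I) (n : 'I_N) :
  Jd X n n = #|Sset X n|.
Proof. by rewrite /Jd eqxx. Qed.

Lemma Jd_off (R : realType) (N : nat) (I : 'I_N -> nat) (X : tensor R I) (n k : 'I_N) :
  k != n -> Jd X n k = I k.
Proof. by move=> h; rewrite /Jd (negPf h). Qed.

Lemma gn_val (R : realType) (N : nat) (I : 'I_N -> nat) (X : tensor R I) (n : 'I_N)
  (t : 'I_#|Sset X n|) : gn X n t = val (enum_val t).
Proof.
have x0 : 'I_(I n) by apply: enum_val t.
rewrite /gn (nth_map x0) ?(enum_val_nth x0) // -cardE.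
exact: ltn_ord.
Qed.

Lemma sorted_S (R : realType) (N : nat) (I : 'I_N -> nat) (X : tensor R I) (n : 'I_N) :
  sorted ltn (map val (enum (Sset X n))).
Proof.
rewrite -[enum _](eq_filter (mem_enum _)).
rewrite -(eq_filter (mem_map val_inj _)) -filter_map.
by rewrite (sorted_filter ltn_trans) // unlock val_ord_enum iota_ltn_sorted.
Qed.

Lemma sigd_val (R : realType) (N : nat) (I : 'I_N -> nat) (X : tensor R I) (n : 'I_N)
  (i0 : midx I) k (j : 'I_(Jd X n k)) : val (@sigd R N I X n i0 k j) = gd X n k (val j).
Proof.
rewrite /sigd val_insubd.
have -> : (gd X n k (val j) < I k)%N; last by [].
have [ek|ne] := eqVneq k n.
  subst k; move: j; rewrite Jd_n => j.
  by rewrite /gd eqxx (gn_val j) ltn_ord.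
rewrite /gd (negPf ne); move: j; rewrite (Jd_off X ne) => j; exact: ltn_ord.
Qed.

Lemma rank_pos (R : realType) (N : nat) (I : 'I_N -> nat) (X : tensor R I) (n : 'I_N)
  (i0 : midx I) : X i0 != 0 -> (0 < \rank (unfolding X n))%N.
Proof.
move=> nz; rewrite lt0n mxrank_eq0; apply: contra nz => /eqP h.
move/matrixP: h => /(_ (i0 n) (enum_rank (restr n i0))).
by rewrite !mxE enum_rankK fullidx_restr => ->.
Qed.

Lemma adm_sigd (R : realType) (N : nat) (I : 'I_N -> nat) (X : tensor R I) (n : 'I_N)
  (i0 : midx I) : X i0 != 0 -> admissible (@sigd R N I X n i0).
Proof.
move=> nz k; have [ek|ne] := eqVneq k n.
  subst k; split.
  - by rewrite Jd_n card_Sset; exact: rank_pos nz.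
  - by rewrite Jd_n card_Sset; exact: rank_leq_row.
  - move=> a b ab; rewrite !sigd_val /gd eqxx /gn.
    apply: (sorted_ltn_nth ltn_trans 0%N (sorted_S X n)) => //;
      rewrite inE size_map -cardE -Jd_n ?ltn_ord //.
split.
- by rewrite Jd_off //; apply: leq_ltn_trans (ltn_ord (i0 k)).
- by rewrite Jd_off.
- by move=> a b ab; rewrite !sigd_val /gd (negPf ne).
Qed.


Lemma sum_ord_eq (R : realType) (p q : nat) (e : p = q) (F : nat -> R) :
  \sum_(b < p) F (val b) = \sum_(t < q) F (val t).
Proof. by subst. Qed.

Lemma Asub (R : realType) (N : nat) (I : 'I_N -> nat) (X : tensor R I) (n : 'I_N) :
  (unfolding X n <= rowsub (fun t : 'I_#|Sset X n| => (enum_val t : 'I_(I n))) (unfolding X n))%MS.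
Proof.
set A := unfolding X n.
have h1 : (A <= rowsub (maxrankfun A) A)%MS by rewrite (eq_maxrowsub A) submx_refl.
apply: submx_trans h1 _; apply/row_subP => t; rewrite row_rowsub.
have ft : maxrankfun A t \in Sset X n by apply: imset_f.
rewrite -(enum_rankK_in ft ft) -(row_rowsub (fun t : 'I_#|Sset X n| => (enum_val t : 'I_(I n)))).
exact: row_sub.
Qed.

Definition Dd (R : realType) (N : nat) (I : 'I_N -> nat) (X : tensor R I) (n : 'I_N)
  (i0 : midx I) (C : 'M[R]_(I n, #|Sset X n|)) :
  forall k : 'I_N, 'I_(I k) -> 'I_(Jd X n k) -> R :=
  fun k a b => if k == n then
     \sum_(t : 'I_#|Sset X n| | val t == val b) C (insubd (i0 n) (val a)) t
   else (val a == val b)%:R.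

Lemma X_mlt (R : realType) (N : nat) (I : 'I_N -> nat) (X : tensor R I) (n : 'I_N)
  (i0 : midx I) (C : 'M[R]_(I n, #|Sset X n|)) :
  unfolding X n = C *m rowsub (fun t : 'I_#|Sset X n| => (enum_val t : 'I_(I n))) (unfolding X n) ->
  forall i, X i = mlt (subtensor X (@sigd R N I X n i0)) (Dd i0 C) i.
Proof.
move=> hC i.
set Y := subtensor X _.
rewrite /mlt (sum_midx n).
pose ei : cidx (Jd X n) n := @finfun _ (fun k : {k : 'I_N | k != n} => 'I_(Jd X n (val k)))
   (fun k => cast_ord (esym (Jd_off X (valP k))) (i (val k))).
have eiv : forall k, val (ei k) = val (i (val k)) by move=> k; rewrite /ei ffunE.
transitivity (\sum_(b : 'I_(Jd X n n)) Dd i0 C (i n) b * Y (fullidx b ei)); last first.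
  apply: eq_bigr => b _.
  rewrite (bigD1 ei) //= [X in _ + X]big1 ?addr0.
    rewrite (bigD1 n) //= !fullidx_at prod_sig big1 ?mulr1 //.
    move=> k _; rewrite fullidx_off /Dd (negPf (valP k)) eiv eqxx //.
  move=> e ne.
  have : ~~ [forall k, e k == ei k].
    apply: contra ne => /forallP h; apply/eqP/ffunP => k; exact/eqP/h.
  case/forallPn => k hk.
  rewrite (bigD1 n) //= prod_sig (bigD1 k) //= fullidx_off /Dd (negPf (valP k)).
  suff -> : (val (i (sval k)) == val (e k)) = false by rewrite mulr0n mul0r mulr0 mul0r.
  apply/negP => /eqP h; move: hk.
  by rewrite -val_eqE eiv h eqxx.
have hY : forall b : 'I_(Jd X n n),
    Y (fullidx b ei) = X (fullidx (insubd (i0 n) (gn X n (val b))) (restr n i)).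
  move=> b; rewrite /Y /subtensor; congr (X _); apply/ffunP => k; rewrite ffunE.
  have [ek|ne] := eqVneq k n.
    by subst k; rewrite !fullidx_at /sigd /gd eqxx.
  have h1 := fullidx_off b ei (exist _ k ne).
  have h2 := fullidx_off (insubd (i0 n) (gn X n (val b))) (restr n i) (exist _ k ne).
  simpl in h1, h2; rewrite h1 h2; apply: val_inj.
  by rewrite sigd_val /gd (negPf ne) /ei /restr !ffunE.
have hD : forall b0, Dd i0 C (i n) b0 = \sum_(t : 'I_#|Sset X n| | val t == val b0) C (i n) t.
  by move=> b0; rewrite /Dd eqxx valKd.
under eq_bigr do rewrite hD hY.
rewrite (@sum_ord_eq R _ _ (Jd_n X n) (fun x => (\sum_(t : 'I_#|Sset X n| | val t == x) C (i n) t) *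
   X (fullidx (insubd (i0 n) (gn X n x)) (restr n i)))).
move/matrixP: hC => /(_ (i n) (enum_rank (restr n i))).
rewrite !mxE enum_rankK fullidx_restr => ->.
apply: eq_bigr => t _; rewrite !mxE enum_rankK.
rewrite (eq_bigl (fun t' => t' == t)) ?big_pred1_eq; last by move=> t'; exact: val_eqE.
congr (_ * X (fullidx _ _)); apply: val_inj.
by rewrite val_insubd gn_val ltn_ord.
Qed.


Lemma rank_sigd (R : realType) (N : nat) (I : 'I_N -> nat) (X : tensor R I) (n : 'I_N)
  (i0 : midx I) m :
  mode_rank (subtensor X (@sigd R N I X n i0)) m = mode_rank X m.
Proof.
apply/eqP; rewrite eqn_leq; apply/andP; split.
  rewrite (mode_rank_ext m (subtensor_mlt X (@sigd R N I X n i0))); exact: mlt_rank.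
have [C hC] := submxP (Asub X n).
rewrite (mode_rank_ext m (X_mlt i0 hC)); exact: mlt_rank.
Qed.

Lemma reduce (R : realType) (N : nat) (I : 'I_N -> nat) (X : tensor R I) (i0 : midx I)
  (nz : X i0 != 0) (n : 'I_N) :
  exists (J : 'I_N -> nat) (sigma : forall n : 'I_N, 'I_(J n) -> 'I_(I n)),
    admissible sigma /\ (forall m, mode_rank (subtensor X sigma) m = mode_rank X m)
    /\ J n = mode_rank X n.
Proof.
exists (Jd X n), (@sigd R N I X n i0); split; first exact: adm_sigd.
split; first by move=> m; exact: rank_sigd.
by rewrite Jd_n card_Sset.
Qed.

Lemma submax_mem (s : seq nat) : s != [::] -> submax s \in s.
Proof.
rewrite /submax; case: ifP => hs; first by case: s hs => //= a l _ _; exact: mem_head.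
move=> _; rewrite -(mem_sort geq); apply: mem_nth; rewrite size_sort.
by rewrite ltnNge hs.
Qed.

Unset Implicit Arguments.
Set Strict Implicit.

Theorem corollary3p6 (R : realType) (N : nat) (I : 'I_N -> nat)
  (HN : (0 < N)%N) (X : tensor R I) (HX : exists i : midx I, X i != 0) :
  has_rank_subtensor (fun J (Y : tensor R J) => max_rank Y) X /\
  has_rank_subtensor (fun J (Y : tensor R J) => submax_rank Y) X.
Proof.
have [i0 nz] := HX.
split.
  have [n0 hn0] := @bigop.eq_bigmax _ (mode_rank X) (ltac:(by rewrite card_ord)).
  have [J [sigma [adm [hr hJ]]]] := reduce nz n0.
  exists J, sigma; split => //.
  have e : max_rank (subtensor X sigma) = max_rank X.
    by rewrite /max_rank; apply: eq_bigr => m _; exact: hr.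
  split; first by rewrite e.
  by exists n0; rewrite e /max_rank hn0 hJ.
have : submax_rank X \in [seq mode_rank X n | n <- enum 'I_N].
  apply: submax_mem; case: N I X HX i0 nz HN => // N' I X HX i0 nz _.
  by rewrite enum_ordSl.
case/mapP => n1 _ hn1.
have [J [sigma [adm [hr hJ]]]] := reduce nz n1.
exists J, sigma; split => //.
have e : submax_rank (subtensor X sigma) = submax_rank X.
  by rewrite /submax_rank; congr submax; apply: eq_map => m; exact: hr.
split; first by rewrite e.
by exists n1; rewrite e hn1 hJ.
Qed.
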